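(* In the standing setting described in the context, there exist constants $B_0,C_0$ such that for all $j\in\mathbb{N}$ and all $\vec x\in\mathbb{C}^d$, $$|m_0((A^\tau)^{-j}\vec x)|\le\Big(1+C_0\min\big(1,\tfrac{|\vec x|}{\beta^j}\big)\Big)\exp\Big(\tfrac{B_0|\mathfrak{Im}(\vec x)|}{\beta^j}\Big).$$
   Context: $\vec x\circ\vec y=\sum_j x_j\overline{y_j}$ for $\vec x,\vec y\in\mathbb{C}^d$; $|\cdot|$ is the Euclidean norm; $\mathfrak{Im}(\vec x)\in\mathbb{R}^d$ is the imaginary part of $\vec x$. $A^\tau$ is the transpose; expansive means all eigenvalues have modulus $>1$. $\beta=\|(A^\tau)^{-1}\|^{-1}$, where $\|\cdot\|$ is the operator norm on the Euclidean space $\mathbb{C}^d$. Standing setting: $A$ is a $d\times d$ expansive integral matrix with $|\det A|=2$ such that $A\mathbb{Z}^d=A^\tau\mathbb{Z}^d$, and $\vec\ell_A,\vec q_A\in\mathbb{Z}^d$ satisfy: $\mathbb{Z}^d=(\vec\ell_A+A\mathbb{Z}^d)\dot\cup A\mathbb{Z}^d$; $\vec q_A\circ A\mathbb{Z}^d\subseteq2\mathbb{Z}$, $\vec q_A\circ(\vec\ell_A+A\mathbb{Z}^d)\subseteq2\mathbb{Z}+1$; for $\vec m\in A\mathbb{Z}^d$, $\vec n\in\mathbb{Z}^d$: $\mathbb{Z}^d=(\vec n-A\mathbb{Z}^d)\dot\cup(\vec\ell_A-\vec m-\vec n+A\mathbb{Z}^d)$; for $\vec m\in\vec\ell_A+A\mathbb{Z}^d$,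 $\vec n\in\mathbb{Z}^d$: $\vec n-A\mathbb{Z}^d=\vec\ell_A-\vec m-\vec n+A\mathbb{Z}^d$. The complex numbers $\{h_{\vec n}\}$ satisfy $\sum_{\vec n}h_{\vec n}\overline{h_{\vec n+\vec k}}=\delta_{\vec0,\vec k}$ ($\vec k\in A\mathbb{Z}^d$), $\sum_{\vec n}h_{\vec n}=\sqrt2$, and vanish outside $\Lambda_0=\mathbb{Z}^d\cap[-N_0,N_0]^d$. $m_0(\vec t)=\frac1{\sqrt2}\sum_{\vec n\in\Lambda_0}h_{\vec n}e^{-i\vec n\circ\vec t}$ for $\vec t\in\mathbb{C}^d$. *)

(* Defs.v *)
From HB Require Import structures.
From mathcomp Require Import all_boot all_order all_algebra.
From mathcomp Require Import boolp classical_sets reals sequences exp trigo.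
From mathcomp Require Import complex.
Set Implicit Arguments. Unset Strict Implicit. Unset Printing Implicit Defensive.
Import Order.TTheory GRing.Theory Num.Theory.
Local Open Scope ring_scope.
Local Open Scope complex_scope.

Section Defs.
Variable R : realType.
Local Notation C := (R[i]).

Definition cnorm2 (z : C) : R := (complex.Re z) ^+ 2 + (complex.Im z) ^+ 2.
Definition cabs (z : C) : R := Num.sqrt (cnorm2 z).

Definition cexp (z : C) : C :=
  ((expR (complex.Re z))%:C) * (cos (complex.Im z) +i* sin (complex.Im z)).

Definition cdot d (x y : 'cV[C]_d) : C := \sum_(j < d) x j 0 * conjc (y j 0).

Definition vnorm d (x : 'cV[C]_d) : R := Num.sqrt (\sum_(j < d) cnorm2 (x j 0)).

Definition imnorm d (x : 'cV[C]_d) : R := Num.sqrt (\sum_(j < d) (complex.Im (x j 0)) ^+ 2).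

Definition opnorm d (M : 'M[C]_d) : R :=
  sup [set vnorm (M *m x) | x in [set x : 'cV[C]_d | vnorm x <= 1]].

Definition intC (z : int) : C := z%:~R.
Definition cmx d (A : 'M[int]_d) : 'M[C]_d := map_mx intC A.
Definition cvec d (n : 'cV[int]_d) : 'cV[C]_d := map_mx intC n.

Definition beta d (A : 'M[int]_d) : R := (opnorm (invmx (cmx A^T)))^-1.

End Defs.

Definition expansive (R : realType) d (A : 'M[int]_d) : Prop :=
  forall lam : R[i], eigenvalue (@cmx R d A) lam -> 1 < cabs lam.

(* dot product of integer vectors (conjugation is trivial on Z) *)
Definition idot d (x y : 'cV[int]_d) : int := \sum_(j < d) x j 0 * y j 0.

Definition inAZ d (A : 'M[int]_d) (v : 'cV[int]_d) : Prop :=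
  exists u : 'cV[int]_d, v = A *m u.

(* Lambda_0 = Z^d cap [-N0,N0]^d, as an explicit (duplicate-free) list *)
Definition lam0 d (N0 : nat) : seq 'cV[int]_d :=
  [seq \col_(i < d) ((f i : nat)%:Z - N0%:Z) | f : {ffun 'I_d -> 'I_(N0.*2.+1)}].

Definition m0 (R : realType) d (N0 : nat) (h : 'cV[int]_d -> R[i]) (t : 'cV[R[i]]_d) : R[i] :=
  (Num.sqrt (2 : R))^-1%:C *
  \sum_(n <- lam0 d N0) h n * cexp (- ('i * cdot (@cvec R d n) t))%R.

Definition inCoset d (A : 'M[int]_d) (c n : 'cV[int]_d) : Prop :=
  exists a, inAZ A a /\ n = c + a.
Definition inNegCoset d (A : 'M[int]_d) (c n : 'cV[int]_d) : Prop :=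
  exists a, inAZ A a /\ n = c - a.

Definition ATinvpow (R : realType) d (A : 'M[int]_d) (j : nat) (x : 'cV[R[i]]_d) : 'cV[R[i]]_d :=
  iter j (fun y => invmx (@cmx R d A^T) *m y) x.

(* Main.v *)
Require Import Defs.
From HB Require Import structures.
From mathcomp Require Import all_boot all_order all_algebra.
From mathcomp Require Import boolp classical_sets reals sequences exp trigo.
From mathcomp Require Import complex.
From mathcomp Require Import topology normedtype derive.
From mathcomp Require Import ring lra.
Import Order.TTheory GRing.Theory Num.Theory.
Import numFieldTopology.Exports numFieldNormedType.Exports.
Local Open Scope ring_scope.
Local Open Scope complex_scope.

Section Aux.
Context {R : realType}.
Local Notation C := R[i].

Lemma cabsE (z : C) : `|z| = (cabs z)%:C.
Proof. by rewrite normc_def. Qed.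

Lemma cabs_ge0 (z : C) : 0 <= cabs z.
Proof. exact: sqrtr_ge0. Qed.

Lemma cabsD (a b : C) : cabs (a + b) <= cabs a + cabs b.
Proof. by rewrite -lecR rmorphD /= -!cabsE ler_normD. Qed.

Lemma cabsM (a b : C) : cabs (a * b) = cabs a * cabs b.
Proof. by apply: complexI; rewrite rmorphM /= -!cabsE normrM. Qed.

Lemma cabsN (a : C) : cabs (- a) = cabs a.
Proof. by apply: complexI; rewrite -!cabsE normrN. Qed.

Lemma cabs_sum I (s : seq I) (P : pred I) (F : I -> C) :
  cabs (\sum_(i <- s | P i) F i) <= \sum_(i <- s | P i) cabs (F i).
Proof. rewrite -lecR rmorph_sum /= -cabsE; apply: (le_trans (ler_norm_sum _ _ _)); by apply: ler_sum => i _; rewrite cabsE. Qed.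

Lemma cabsR (r : R) : cabs r%:C = `|r|.
Proof. by rewrite /cabs /cnorm2 /= expr0n /= addr0 sqrtr_sqr. Qed.

Lemma cabsJ (z : C) : cabs (conjc z) = cabs z.
Proof. by case: z => a b; rewrite /cabs /cnorm2 /= sqrrN. Qed.

Lemma Re_le (z : C) : `|complex.Re z| <= cabs z.
Proof.
rewrite /cabs /cnorm2 -sqrtr_sqr ler_sqrt ?addr_ge0 ?sqr_ge0 //.
by rewrite lerDl sqr_ge0.
Qed.

Lemma Im_le (z : C) : `|complex.Im z| <= cabs z.
Proof.
rewrite /cabs /cnorm2 -sqrtr_sqr ler_sqrt ?addr_ge0 ?sqr_ge0 //.
by rewrite lerDr sqr_ge0.
Qed.

Lemma cabs_i : cabs ('i%C : C) = 1.
Proof. by rewrite /cabs /cnorm2 /= expr0n /= add0r expr1n sqrtr1. Qed.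

Lemma cabs_cplx (x y : R) : cabs (x +i* y) <= `|x| + `|y|.
Proof.
have -> : x +i* y = x%:C + y%:C * 'i%C.
  by apply/eqP; rewrite eq_complex /= !mulr0 !mul0r !mulr1 subr0 !addr0 add0r !eqxx.
by apply: (le_trans (cabsD _ _)); rewrite cabsM cabs_i mulr1 !cabsR.
Qed.

Lemma cabs_cexp (z : C) : cabs (cexp z) = expR (complex.Re z).
Proof.
rewrite /cexp cabsM cabsR ger0_norm ?expR_ge0 //.
by rewrite /cabs /cnorm2 /= cos2Dsin2 sqrtr1 mulr1.
Qed.

Lemma lip_sin (x y : R) : `|sin x - sin y| <= `|x - y|.
Proof.
wlog yx : x y / y <= x.
  move=> H; case: (leP y x) => [/H//|/ltW /H]; by rewrite distrC (distrC x).
have [|c _ ->] := @MVT_segment _ sin cos _ _ yx.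
  by apply: derivable_within_continuous => z _; exact: ex_derive.
by rewrite normrM -[X in _ <= X]mul1r ler_wpM2r // cos_max.
Qed.

Lemma lip_cos (x y : R) : `|cos x - cos y| <= `|x - y|.
Proof.
wlog yx : x y / y <= x.
  move=> H; case: (leP y x) => [/H//|/ltW /H]; by rewrite distrC (distrC x).
have [|c _ ->] := @MVT_segment _ cos (fun t => - sin t) _ _ yx.
  by apply: derivable_within_continuous => z _; exact: ex_derive.
by rewrite normrM /= normrN -[X in _ <= X]mul1r ler_wpM2r // sin_max.
Qed.

Lemma expR_sub1 (a : R) : `|expR a - 1| <= `|a| * expR `|a|.
Proof.
set E := expR a; set F := expR (- a).
have e1 : 1 + a <= E := expR_ge1Dx a.
have e2 : 1 - a <= F := expR_ge1Dx (- a).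
have e3 : E * F = 1 := expRxMexpNx_1 a.
have e4 : 0 < E := expR_gt0 a.
have e5 : 0 <= E * (F - (1 - a)) by rewrite mulr_ge0 ?subr_ge0 // ltW.
case: (leP 0 a) => a0.
  rewrite !ger0_norm -/E //; last by lra.
  nra.
have e6 : E < 1 by rewrite /E expR_lt1.
rewrite ltr0_norm ?ltr0_norm -/F //; last by lra.
have e7 : 0 <= - a * (F - 1) by rewrite mulr_ge0 //; lra.
nra.
Qed.

Lemma cexp_sub1 (z : C) : cabs (cexp z - 1) <= 3%:R * cabs z * expR (cabs z).
Proof.
case: z => a b; rewrite /cexp /=.
set u := cos b +i* sin b.
have -> : (expR a)%:C * u - 1 = (expR a - 1)%:C * u + (u - 1).
  by rewrite rmorphB /= rmorph1; ring.
apply: le_trans (cabsD _ _) _.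
rewrite cabsM cabsR.
have hu : cabs u = 1 by rewrite /cabs /cnorm2 /= cos2Dsin2 sqrtr1.
have hu1 : cabs (u - 1) <= `|cos b - 1| + `|sin b|.
  have -> : u - 1 = (cos b - 1) +i* sin b.
    by apply/eqP; rewrite eq_complex /= oppr0 addr0 !eqxx.
  exact: cabs_cplx.
have hc : `|cos b - 1| <= `|b| by have := lip_cos b 0; rewrite cos0 subr0.
have hs : `|sin b| <= `|b| by have := lip_sin b 0; rewrite sin0 !subr0.
have ha := expR_sub1 a.
have hA : `|a| <= cabs (a +i* b) := Re_le (a +i* b).
have hB : `|b| <= cabs (a +i* b) := Im_le (a +i* b).
set c := cabs (a +i* b) in hA hB *.
have hE : expR `|a| <= expR c by rewrite ler_expR.
have h1 : 1 <= expR c by rewrite -expR0 ler_expR cabs_ge0.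
have p1 : `|a| * expR `|a| <= c * expR c.
  by rewrite ler_pM ?normr_ge0 ?expR_ge0.
have p2 : c * 1 <= c * expR c by rewrite ler_wpM2l ?cabs_ge0.
rewrite hu; lra.
Qed.

End Aux.

Section Vec.
Context {R : realType}.
Local Notation C := R[i].
Context {d : nat}.
Implicit Types (v : 'cV[C]_d).

Lemma cnorm2_ge0 (z : C) : 0 <= cnorm2 z.
Proof. by rewrite /cnorm2 addr_ge0 ?sqr_ge0. Qed.

Lemma cnorm2E (z : C) : cnorm2 z = cabs z ^+ 2.
Proof. by rewrite /cabs sqr_sqrtr // cnorm2_ge0. Qed.

Lemma vnorm_ge0 v : 0 <= vnorm v.
Proof. exact: sqrtr_ge0. Qed.

Lemma entry_le v k : cabs (v k 0) <= vnorm v.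
Proof.
rewrite /vnorm /cabs ler_sqrt; last by rewrite sumr_ge0 // => i _; exact: cnorm2_ge0.
by rewrite (bigD1 k) //= lerDl sumr_ge0 // => i _; exact: cnorm2_ge0.
Qed.

Lemma imentry_le v k : `|complex.Im (v k 0)| <= imnorm v.
Proof.
rewrite /imnorm -sqrtr_sqr ler_sqrt; last by rewrite sumr_ge0 // => i _; exact: sqr_ge0.
by rewrite (bigD1 k) //= lerDl sumr_ge0 // => i _; exact: sqr_ge0.
Qed.

Lemma sqrtD_le {a b : R} : 0 <= a -> 0 <= b ->
  Num.sqrt (a + b) <= Num.sqrt a + Num.sqrt b.
Proof.
move=> a0 b0.
have sa := sqrtr_ge0 a; have sb := sqrtr_ge0 b.
rewrite -[X in _ <= X]ger0_norm ?addr_ge0 // -sqrtr_sqr ler_sqrt ?sqr_ge0 //.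
rewrite sqrrD !sqr_sqrtr //.
have := mulr_ge0 sa sb; lra.
Qed.

Lemma sqrt_sum_le I (s : seq I) (F : I -> R) : (forall i, 0 <= F i) ->
  Num.sqrt (\sum_(i <- s) F i) <= \sum_(i <- s) Num.sqrt (F i).
Proof.
move=> F0; elim: s => [|x s IH]; first by rewrite !big_nil sqrtr0.
rewrite !big_cons.
have hs : 0 <= \sum_(i <- s) F i by apply: sumr_ge0 => i _.
by apply: le_trans (sqrtD_le (F0 x) hs) _; rewrite lerD2l.
Qed.

Lemma vnorm_le_sum v : vnorm v <= \sum_k cabs (v k 0).
Proof. by apply: sqrt_sum_le => i; exact: cnorm2_ge0. Qed.

Lemma cnorm2M (r : R) (z : C) : cnorm2 (r%:C * z) = r ^+ 2 * cnorm2 z.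
Proof. by case: z => a b; rewrite /cnorm2 /=; ring. Qed.

Lemma vnormZ (r : R) v : vnorm (r%:C *: v) = `|r| * vnorm v.
Proof.
rewrite /vnorm (eq_bigr (fun j => r ^+ 2 * cnorm2 (v j 0))); last first.
  by move=> j _; rewrite mxE cnorm2M.
by rewrite -mulr_sumr sqrtrM ?sqr_ge0 // sqrtr_sqr.
Qed.

Lemma vnorm_eq0 v : vnorm v = 0 -> v = 0.
Proof.
move=> /eqP; rewrite sqrtr_eq0 => hle.
have hs : \sum_(j < d) cnorm2 (v j 0) = 0.
  by apply/eqP; rewrite eq_le hle sumr_ge0 // => j _; exact: cnorm2_ge0.
apply/matrixP => i j; rewrite (ord1 j) mxE.
have := psumr_eq0P (fun j _ => cnorm2_ge0 (v j 0)) hs (i := i) isT.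
rewrite cnorm2E => /eqP; rewrite sqrf_eq0 => /eqP h0.
by apply/eqP; rewrite -normr_eq0 cabsE h0.
Qed.

Lemma vnorm0 : vnorm (0 : 'cV[C]_d) = 0.
Proof. by rewrite /vnorm big1 ?sqrtr0 // => j _; rewrite mxE /cnorm2 /= expr0n addr0. Qed.

Lemma mv_bound (M : 'M[C]_d) v :
  vnorm (M *m v) <= (\sum_k \sum_l cabs (M k l)) * vnorm v.
Proof.
apply: le_trans (vnorm_le_sum _) _.
rewrite mulr_suml; apply: ler_sum => k _.
rewrite mxE mulr_suml; apply: le_trans (cabs_sum _ _ _ _) _; apply: ler_sum => l _.
by rewrite cabsM ler_wpM2l ?cabs_ge0 ?entry_le.
Qed.

Lemma opnorm_props (M : 'M[C]_d) :
  0 <= opnorm M /\ forall v, vnorm (M *m v) <= opnorm M * vnorm v.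
Proof.
set K := \sum_k \sum_l cabs (M k l).
have K0 : 0 <= K.
  by rewrite sumr_ge0 // => k _; rewrite sumr_ge0 // => l _; exact: cabs_ge0.
rewrite /opnorm; set S := (X in sup X).
have hsup : has_sup S.
  split; first by exists 0, 0; rewrite /= ?mulmx0 vnorm0 ?ler01.
  exists K => _ [x /= hx <-]; apply: le_trans (mv_bound M x) _.
  by rewrite -[X in _ <= X]mulr1 ler_wpM2l.
have ub : forall x, vnorm x <= 1 -> vnorm (M *m x) <= sup S.
  by move=> x hx; apply: sup_upper_bound => //; exists x.
split.
  by have := ub 0; rewrite mulmx0 vnorm0 ler01 => /(_ isT).
move=> v.
have [/vnorm_eq0 ->|vn] := eqVneq (vnorm v) 0.
  by rewrite mulmx0 vnorm0 mulr0.
have r0 : 0 < vnorm v by rewrite lt_def vn vnorm_ge0.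
have h1 : vnorm ((vnorm v)^-1%:C *: v) <= 1.
  by rewrite vnormZ ger0_norm ?invr_ge0 ?vnorm_ge0 // mulVf.
have := ub _ h1; rewrite -scalemxAr vnormZ ger0_norm ?invr_ge0 ?vnorm_ge0 //.
by rewrite ler_pdivrMl // mulrC.
Qed.

End Vec.

Section Real.
Context {R : realType}.
Local Notation C := R[i].
Context {d : nat}.

Definition imvec (v : 'cV[C]_d) : 'cV[C]_d := map_mx (fun z => (complex.Im z)%:C) v.

Lemma imnormE (v : 'cV[C]_d) : imnorm v = vnorm (imvec v).
Proof.
rewrite /imnorm /vnorm; congr Num.sqrt; apply: eq_bigr => j _.
by rewrite mxE /cnorm2 /= expr0n addr0.
Qed.

Lemma Im_sum I (s : seq I) (P : pred I) (F : I -> C) :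
  complex.Im (\sum_(i <- s | P i) F i) = \sum_(i <- s | P i) complex.Im (F i).
Proof. by apply: big_morph => // [[a b] [c e]]. Qed.

Lemma Im_Rmul (r : R) (z : C) : complex.Im (r%:C * z) = r * complex.Im z.
Proof. by case: z => a b /=; rewrite mul0r addr0. Qed.

Lemma im_mul (N : 'M[R]_d) (v : 'cV[C]_d) :
  imvec (map_mx (real_complex R) N *m v) = map_mx (real_complex R) N *m imvec v.
Proof.
apply/matrixP => i j; rewrite !mxE Im_sum rmorph_sum /=.
by apply: eq_bigr => l _; rewrite !mxE Im_Rmul rmorphM.
Qed.

Lemma cmx_real (B : 'M[int]_d) :
  @cmx R d B = map_mx (real_complex R) (map_mx (fun z : int => z%:~R : R) B).
Proof. by apply/matrixP => i j; rewrite !mxE /intC rmorph_int. Qed.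

Lemma invmx_real (B : 'M[int]_d) : invmx (@cmx R d B) =
  map_mx (real_complex R) (invmx (map_mx (fun z : int => z%:~R : R) B)).
Proof. by rewrite cmx_real map_invmx. Qed.

Lemma iter_bounds (A : 'M[int]_d) j (x : 'cV[C]_d) :
  vnorm (ATinvpow A j x) <= opnorm (invmx (@cmx R d A^T)) ^+ j * vnorm x /\
  imnorm (ATinvpow A j x) <= opnorm (invmx (@cmx R d A^T)) ^+ j * imnorm x.
Proof.
have [op0 opb] := opnorm_props (invmx (@cmx R d A^T)).
rewrite /ATinvpow; elim: j => [|j [IH1 IH2]] /=; first by rewrite !expr0 !mul1r.
split.
  apply: le_trans (opb _) _; rewrite exprS -mulrA ler_wpM2l //.
rewrite imnormE invmx_real im_mul -invmx_real.
by apply: le_trans (opb _) _; rewrite -imnormE exprS -mulrA ler_wpM2l.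
Qed.

Lemma intC_real (z : int) : @intC R z = (z%:~R : R)%:C :> C.
Proof. by rewrite /intC rmorph_int. Qed.

Lemma cdot_bounds (n : 'cV[int]_d) (y : 'cV[C]_d) (N0 : nat) :
  (forall k, `|n k 0| <= N0%:Z) ->
  cabs (cdot (@cvec R d n) y) <= N0%:R *+ d * vnorm y /\
  complex.Im (cdot (@cvec R d n) y) <= N0%:R *+ d * imnorm y.
Proof.
move=> hn.
have hc k : `|(n k 0)%:~R : R| <= N0%:R.
  by rewrite -intr_norm; have := hn k; rewrite -(ler_int R).
have hS : forall q : R, N0%:R *+ d * q = \sum_(k < d) (N0%:R * q).
  by move=> q; rewrite sumr_const card_ord mulrnAl.
rewrite /cdot !hS; split.
  apply: le_trans (cabs_sum _ _ _ _) _; apply: ler_sum => k _.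
  rewrite mxE intC_real cabsM cabsJ cabsR.
  by apply: ler_pM; rewrite ?normr_ge0 ?cabs_ge0 ?hc ?entry_le.
rewrite Im_sum; apply: ler_sum => k _.
rewrite mxE intC_real Im_Rmul.
apply: le_trans (ler_norm _) _; rewrite normrM.
have -> : `|complex.Im (conjc (y k 0))| = `|complex.Im (y k 0)|.
  by case: (y k 0) => a b /=; rewrite normrN.
by apply: ler_pM; rewrite ?normr_ge0 ?hc ?imentry_le.
Qed.

End Real.

Theorem lemma8p4 (R : realType) (d : nat) (A : 'M[int]_d) (lA qA : 'cV[int]_d)
  (N0 : nat) (h : 'cV[int]_d -> R[i])
  (hexp : @expansive R d A)
  (hdet : `|\det A| = 2 :> int)
  (hAAT : forall v : 'cV[int]_d, inAZ A v <-> inAZ A^T v)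
  (hl : forall n : 'cV[int]_d,
      (inCoset A lA n \/ inAZ A n) /\ ~ (inCoset A lA n /\ inAZ A n))
  (hq0 : forall m : 'cV[int]_d, inAZ A m -> (2 %| idot qA m)%Z)
  (hq1 : forall m : 'cV[int]_d, inCoset A lA m -> ~~ (2 %| idot qA m)%Z)
  (h4 : forall m n : 'cV[int]_d, inAZ A m -> forall k : 'cV[int]_d,
      (inNegCoset A n k \/ inCoset A (lA - m - n) k) /\
      ~ (inNegCoset A n k /\ inCoset A (lA - m - n) k))
  (h5 : forall m n : 'cV[int]_d, inCoset A lA m -> forall k : 'cV[int]_d,
      inNegCoset A n k <-> inCoset A (lA - m - n) k)
  (horth : forall k : 'cV[int]_d, inAZ A k ->
      \sum_(n <- lam0 d N0) h n * conjc (h (n + k)) = (k == 0)%:R)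
  (hsum : \sum_(n <- lam0 d N0) h n = (Num.sqrt (2 : R))%:C)
  (hsupp : forall n : 'cV[int]_d, (exists i : 'I_d, (N0%:Z < `|n i 0|)%R) -> h n = 0) :
  exists B0 C0 : R, forall (j : nat) (x : 'cV[R[i]]_d),
    cabs (m0 N0 h (ATinvpow A j x)) <=
      (1 + C0 * Num.min 1 (vnorm x / @beta R d A ^+ j)) *
      expR (B0 * imnorm x / @beta R d A ^+ j).
Proof.
set M := invmx (@cmx R d A^T).
set op := opnorm M.
set Nd : R := N0%:R *+ d.
set H : R := \sum_(n <- lam0 d N0) cabs (h n).
have Nd0 : 0 <= Nd by rewrite mulrn_wge0.
have H0 : 0 <= H by rewrite sumr_ge0 // => n _; exact: cabs_ge0.
have K0 : 0 <= 3%:R * Nd * expR Nd by rewrite mulr_ge0 ?expR_ge0 // mulr_ge0.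
exists Nd, (H + H * (3%:R * Nd * expR Nd)).
move=> j x.
have [op0 _] := opnorm_props M.
have betaE : @beta R d A ^+ j = (op ^+ j)^-1 by rewrite /beta -/M -/op exprVn.
rewrite betaE !invrK -[Nd * imnorm x * _]mulrA.
have [hy1 hy2] := iter_bounds A j x.
rewrite -/M -/op in hy1 hy2.
set y := ATinvpow A j x in hy1 hy2 *.
set t := vnorm x * op ^+ j.
set s := imnorm x * op ^+ j.
have t0 : 0 <= t by rewrite mulr_ge0 ?vnorm_ge0 ?exprn_ge0.
have s0 : 0 <= s by rewrite mulr_ge0 ?exprn_ge0 // imnormE vnorm_ge0.
have vy : vnorm y <= t by rewrite /t mulrC.
have iy : imnorm y <= s by rewrite /s mulrC.
have cabs0 : cabs (0 : R[i]) = 0 by rewrite /cabs /cnorm2 /= expr0n /= addr0 sqrtr0.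
have key n : h n != 0 ->
    cabs (cdot (@cvec R d n) y) <= Nd * t /\ complex.Im (cdot (@cvec R d n) y) <= Nd * s.
  move=> hn.
  have hb : forall k, `|n k 0| <= N0%:Z.
    move=> k; rewrite leNgt; apply/negP => hk; move/eqP: hn; apply.
    by apply: hsupp; exists k.
  have [b1 b2] := cdot_bounds n y N0 hb.
  split; [apply: le_trans b1 _|apply: le_trans b2 _]; by rewrite ler_wpM2l.
have cw (w : R[i]) : complex.Re (- ('i * w)) = complex.Im w /\ cabs (- ('i * w)) = cabs w.
  rewrite -complexiE; split; last by rewrite cabsN cabsM cabs_i mul1r.
  by case: w => a b /=; ring.
set c2 : R := (Num.sqrt 2)^-1.
have s2 : 1 <= Num.sqrt (2 : R).
  by rewrite -[X in X <= _]sqrtr1 ler_sqrt //; lra.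
have c20 : 0 <= c2 by rewrite invr_ge0 sqrtr_ge0.
have c21 : c2 <= 1 by rewrite invf_le1 // (lt_le_trans ltr01).
set E := expR (Nd * s).
have E1 : 1 <= E by rewrite -expR0 ler_expR mulr_ge0.
have large : cabs (m0 N0 h y) <= H * E.
  rewrite /m0 cabsM cabsR ger0_norm // -/c2.
  apply: le_trans (ler_wpM2l c20 (cabs_sum _ _ _ _)) _.
  rewrite -[X in _ <= X]mul1r; apply: ler_pM => //.
    by apply: sumr_ge0 => n _; exact: cabs_ge0.
  rewrite /H mulr_suml; apply: ler_sum => n _.
  have [hn0|hn] := eqVneq (h n) 0.
    by rewrite hn0 mul0r cabs0 !mul0r.
  rewrite cabsM; apply: ler_wpM2l; first exact: cabs_ge0.
  rewrite cabs_cexp (cw _).1 ler_expR; exact: (key n hn).2.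
have hone : c2%:C * \sum_(n <- lam0 d N0) h n = 1.
  rewrite hsum -rmorphM /= mulVf ?rmorph1 //.
  by rewrite gt_eqF // (lt_le_trans ltr01 s2).
set K := 3%:R * Nd * expR Nd.
have small : t <= 1 -> cabs (m0 N0 h y - 1) <= H * K * t.
  move=> t1.
  have e : m0 N0 h y - 1 = c2%:C * \sum_(n <- lam0 d N0)
      h n * (cexp (- ('i * cdot (@cvec R d n) y)) - 1).
    rewrite -[in LHS]hone /m0 -/c2 -mulrBr -sumrB; congr (_ * _).
    by apply: eq_bigr => n _; rewrite mulrBr mulr1.
  rewrite e cabsM cabsR ger0_norm //.
  apply: le_trans (ler_wpM2l c20 (cabs_sum _ _ _ _)) _.
  rewrite -[X in _ <= X]mul1r; apply: ler_pM => //.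
    by apply: sumr_ge0 => n _; exact: cabs_ge0.
  rewrite /H !mulr_suml; apply: ler_sum => n _.
  have [hn0|hn] := eqVneq (h n) 0.
    by rewrite hn0 mul0r cabs0 !mul0r.
  rewrite cabsM -mulrA; apply: ler_wpM2l; first exact: cabs_ge0.
  apply: le_trans (cexp_sub1 _) _; rewrite (cw _).2.
  have [k1 _] := key n hn.
  set w := cabs _ in k1 *.
  have k2 : w <= Nd by apply: le_trans k1 _; rewrite ler_piMr.
  have hE : expR w <= expR Nd by rewrite ler_expR.
  have p : w * expR w <= (Nd * t) * expR Nd.
    by apply: ler_pM; rewrite ?cabs_ge0 ?expR_ge0.
  rewrite /K; nra.
have c1 : cabs (1 : R[i]) = 1.
  by rewrite /cabs /cnorm2 /= expr0n expr1n /= addr0 sqrtr1.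
have K0' : 0 <= K by [].
case: (leP t 1) => ht.
  have h1 := small ht.
  have h2 := cabsD 1 (m0 N0 h y - 1).
  rewrite addrC subrK c1 in h2.
  have p1 : 0 <= (1 + (H + H * K) * t) * (E - 1).
    by rewrite mulr_ge0 // ?subr_ge0 // addr_ge0 // mulr_ge0 // addr_ge0 // mulr_ge0.
  have p2 : 0 <= H * t by rewrite mulr_ge0.
  nra.
rewrite mulr1.
have p : 0 <= (1 + H * K) * E.
  apply: mulr_ge0; last exact: le_trans ler01 E1.
  by apply: addr_ge0; [exact: ler01 | exact: mulr_ge0].
nra.
Qed.
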